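(* Let $\tfrac12\le\gamma$ and $a=\tfrac12$. Let $\overline{F}_0\ge0$ be a function of $(s,\rho)$, $s\in\mathbb{R}$, $\rho\ge0$, and for $t\ge0$, $r>0$ define $$\overline{\phi}(t,r)=\frac4r\int_{t+r}^\infty\int_{t-r}^{t+r}\rho\,\overline{F}_0(s,\rho)\,d\eta\,d\xi,\qquad s=\frac{\xi+\eta}2,\ \rho=\frac{\xi-\eta}2.$$ Suppose that for all $(\xi,\eta)$ with $|\eta|\le\xi$, $$\rho\,\overline{F}_0(s,\rho)\le\frac{1}{\langle\xi\rangle\langle\eta\rangle^{2+2\gamma}}\chi_{\xi^a<\eta<\xi/2}.$$ Then $\overline{\phi}(t,r)\lesssim\langle t+r\rangle^{-2}$.
   Context: $\langle x\rangle=(1+x^2)^{1/2}$, $\chi_A$ denotes the indicator function of the set $A$, and $\lesssim$ means bounded by a constant multiple independent of $t,r$. *)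

(* Defs.v *)
From HB Require Import structures.
From mathcomp Require Import all_boot all_order all_algebra.
From mathcomp Require Import all_classical all_reals all_analysis.
Set Implicit Arguments. Unset Strict Implicit. Unset Printing Implicit Defensive.
Import Order.TTheory GRing.Theory Num.Theory.
Import numFieldNormedType.Exports.
Local Open Scope classical_set_scope.
Local Open Scope ring_scope.

Definition jbr {R : realType} (x : R) : R := Num.sqrt (1 + x ^+ 2).

Definition aexp {R : realType} : R := 2^-1.

Definition phibar {R : realType} (F0 : R -> R -> R) (t r : R) : \bar R :=
  let D1 : set R := `[t + r, +oo[%classic in
  let D2 : set R := `[t - r, t + r]%classic in
  let g (xi eta : R) : R := ((xi - eta) / 2) * F0 ((xi + eta) / 2) ((xi - eta) / 2) in
  ((4 / r)%:E *
   \int[@lebesgue_measure R]_(xi in D1)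
     \int[@lebesgue_measure R]_(eta in D2) (g xi eta)%:E)%E.

(* Main.v *)
Require Import Defs.
From HB Require Import structures.
From mathcomp Require Import all_boot all_order all_algebra.
From mathcomp Require Import all_classical all_reals all_analysis.
From mathcomp Require Import ring lra.
Import Order.TTheory GRing.Theory Num.Theory.
Import numFieldNormedType.Exports.
Local Open Scope classical_set_scope.
Local Open Scope ring_scope.

Lemma le_int_nm {R : realType} (D1 D2 : set R) (f1 f2 : R -> \bar R) :
  (forall x, D1 x -> (0 <= f1 x)%E) -> (forall x, D2 x -> (0 <= f2 x)%E) ->
  (forall x, D1 x -> (D2 x /\ (f1 x <= f2 x)%E) \/ f1 x = 0%E) ->
  (\int[@lebesgue_measure R]_(x in D1) f1 x <= \int[@lebesgue_measure R]_(x in D2) f2 x)%E.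
Proof.
move=> h1 h2 h12.
rewrite [X in (X <= _)%E]ge0_integralE // [X in (_ <= X)%E]ge0_integralE //.
apply: ereal_sup_le => _ [h /= hf <-]; exists h => //= x.
apply: (le_trans (hf x)); rewrite /patch.
case: ifPn => [/[1!inE] D1x|_].
  case: (h12 x D1x) => [[D2x le12]|->].
    by rewrite ifT ?inE.
  by case: ifPn => // /[1!inE] /h2.
by case: ifPn => // /[1!inE] /h2.
Qed.

Lemma Fder {R : realType} (c : R) (k : nat) (x : R) : x != 0 ->
  is_derive x 1 (fun y : R => - (c / k.+1%:R) * (y ^+ k.+1)^-1) (c / x ^+ k.+2).
Proof.
move=> x0.
have Hx : (@id R ^+ k.+1) x != 0 by rewrite exprfctE expf_neq0.
have dX : is_derive x (1:R) (@id R ^+ k.+1) ((k.+1%:R * x ^+ k) *: 1).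
  exact: is_deriveX.
have dV := @is_deriveV R (@id R ^+ k.+1) x _ 1 Hx dX.
have dZ := is_deriveZ (- (c / k.+1%:R)) dV.
have -> : (fun y : R => - (c / k.+1%:R) * (y ^+ k.+1)^-1) =
   (- (c / k.+1%:R)) \*: (fun y => ((@id R ^+ k.+1) y)^-1).
  by apply/funext => y /=; rewrite exprfctE.
apply: (is_derive_eq dZ).
rewrite /GRing.scale/= mulr1 exprfctE /=.
rewrite !exprS.
field.
by rewrite expf_neq0 // x0 nat1r pnatr_eq0.
Qed.

Lemma powy {R : realType} (k : nat) : (x ^+ k.+1 : R) @[x --> +oo] --> +oo.
Proof.
apply/cvgryPge => M; near=> x.
rewrite (@le_trans _ _ x)// ler_eXnr//.
all: near: x; exact: nbhs_pinfty_ge.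
Unshelve. all: end_near. Qed.

Lemma int_pow {R : realType} (a c : R) (k : nat) : 0 < a -> 0 <= c ->
  (\int[@lebesgue_measure R]_(x in `[a, +oo[) (c / x ^+ k.+2)%:E
     = (c / (k.+1%:R * a ^+ k.+1))%:E)%E.
Proof.
move=> a0 c0.
set F := fun y : R => - (c / k.+1%:R) * (y ^+ k.+1)^-1.
have kn0 : (k.+1%:R : R) != 0 by rewrite pnatr_eq0.
rewrite (_ : c / (k.+1%:R * a ^+ k.+1) = 0 - F a); last first.
  rewrite /F; field; rewrite expf_neq0 ?gt_eqF //=.
rewrite EFinB.
have dF (x : R) : 0 < x -> is_derive x 1 F (c / x ^+ k.+2).
  by move=> x0; apply: Fder; rewrite gt_eqF.
apply: ge0_continuous_FTC2y.
- move=> x ax; rewrite divr_ge0 // exprn_ge0 //; exact: (le_trans (ltW a0) ax).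
- apply: continuous_in_subspaceT => x; rewrite inE /= in_itv /= andbT => ax.
  have x0 : x != 0 by rewrite gt_eqF // (lt_le_trans a0 ax).
  have hc : {for x, continuous (fun y : R => c / y ^+ k.+2)}.
    apply: (@continuousM _ _ (fun=> c) (fun y : R => (y ^+ k.+2)^-1)); first exact: cvg_cst.
    apply: (@continuousV _ _ (fun y : R => (y ^+ k.+2))); first by rewrite expf_neq0.
    apply: differentiable_continuous; apply/derivable1_diffP; exact: (@exprn_derivable R k.+2 x 1).
  exact: hc.
- have Hp : \forall x \near +oo%R, 0 < x ^+ k.+1 :> R.
    by near=> x; rewrite exprn_gt0 //; near: x; apply: nbhs_pinfty_gt.
  have := (gtr0_cvgV0 Hp).2 (powy k).
  move=> H; have := cvgMl_tmp (a:=- (c / k.+1%:R)) (H _).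
  rewrite mulr0; exact.
- move=> x ax; have [] := dF x (lt_trans a0 ax) => //.
- apply: cvg_at_right_filter.
  apply: differentiable_continuous; apply/derivable1_diffP.
  by have [] := dF a a0.
- move=> x; rewrite in_itv /= andbT => ax.
  by rewrite derive1E; case: (dF x (lt_trans a0 ax)).
Unshelve. all: end_near. Qed.

Lemma jbr_ge_abs {R : realType} (x : R) : `|x| <= jbr x.
Proof. by rewrite /jbr -sqrtr_sqr ler_sqrt ?lerDr // addr_ge0 // sqr_ge0. Qed.

Lemma jbr_ge1 {R : realType} (x : R) : 1 <= jbr x.
Proof. by rewrite /jbr -[X in X <= _]sqrtr1 ler_sqrt ?lerDl ?sqr_ge0 // addr_ge0 // sqr_ge0. Qed.

Lemma key {R : realType} (gamma : R) (F0 : R -> R -> R) (xi eta : R) :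
  2^-1 <= gamma ->
  (forall s rho, 0 <= rho -> 0 <= F0 s rho) ->
  (forall xi eta : R, `|eta| <= xi ->
     ((xi - eta) / 2) * F0 ((xi + eta) / 2) ((xi - eta) / 2) <=
     (jbr xi * jbr eta `^ (2 + 2 * gamma))^-1 *
     \1_[set e : R | xi `^ aexp < e < xi / 2] eta) ->
  0 < xi -> `|eta| <= xi ->
  0 <= ((xi - eta) / 2) * F0 ((xi + eta) / 2) ((xi - eta) / 2) /\
  (((xi - eta) / 2) * F0 ((xi + eta) / 2) ((xi - eta) / 2) = 0 \/
   (Num.sqrt xi < eta /\
    ((xi - eta) / 2) * F0 ((xi + eta) / 2) ((xi - eta) / 2) <= (1 / xi) / eta ^+ 3)).
Proof.
move=> hg H0 H xi0 hle.
have etale : eta <= xi by apply: le_trans (ler_norm _) hle.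
have rho0 : 0 <= (xi - eta) / 2 by rewrite divr_ge0 // subr_ge0.
have g0 := mulr_ge0 rho0 (H0 ((xi + eta) / 2) _ rho0).
split => //.
have := H xi eta hle.
rewrite indicE; case: (boolP (eta \in _)) => [|_]; last first.
  by rewrite mulr0 => hle0; left; apply/le_anti; rewrite hle0 g0.
rewrite inE /= /aexp powR12_sqrt ?(ltW xi0) // => /andP[h1 h2].
rewrite mulr1 => hb; right; split => //.
apply: (le_trans hb).
have sq0 : 0 < Num.sqrt xi by rewrite sqrtr_gt0.
have eta0 : 0 < eta by apply: lt_trans h1.
have e30 : 0 < eta ^+ 3 by rewrite exprn_gt0.
have jx : 0 < jbr xi by rewrite (lt_le_trans _ (jbr_ge1 _)).
have jp : 0 < jbr eta `^ (2 + 2 * gamma) by rewrite powR_gt0 // (lt_le_trans _ (jbr_ge1 _)).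
rewrite mul1r -invfM ler_pV2 ?inE ?unitfE ?mulf_neq0 ?gt_eqF ?mulr_gt0 //.
apply: ler_pM; rewrite ?(ltW xi0) ?(ltW e30) //.
  by apply: le_trans (ler_norm _) (jbr_ge_abs _).
have j1 := jbr_ge1 eta.
apply: (@le_trans _ _ (jbr eta `^ 3)).
  rewrite powR_mulrn ?(le_trans ler01) //.
  rewrite lerXn2r ?nnegrE ?(ltW eta0) ?(le_trans ler01) //.
  by apply: le_trans (ler_norm _) (jbr_ge_abs _).
apply: ler_powR => //; lra.
Qed.

Lemma int_cst_itv {R : realType} (c u v : R) : u <= v ->
  (\int[@lebesgue_measure R]_(x in `[u, v]) c%:E = (c * (v - u))%:E)%E.
Proof.
move=> uv.
have := @integral_cst _ _ _ (@lebesgue_measure R) `[u, v] (measurable_itv _) c%:E.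
rewrite /cst /= => ->.
rewrite lebesgue_measure_itv /=.
case: ifPn => [_|]; first by rewrite -EFinB -EFinM.
rewrite lte_fin -leNgt => vu.
have -> : v = u by apply/le_anti; rewrite uv vu.
by rewrite subrr mulr0 mule0.
Qed.

Theorem lemmaA2 (R : realType) (gamma : R) (F0 : R -> R -> R) :
  2^-1 <= gamma ->
  measurable_fun [set: R * R] (fun p : R * R => F0 p.1 p.2) ->
  (forall s rho, 0 <= rho -> 0 <= F0 s rho) ->
  (forall xi eta : R, `|eta| <= xi ->
     ((xi - eta) / 2) * F0 ((xi + eta) / 2) ((xi - eta) / 2) <=
     (jbr xi * jbr eta `^ (2 + 2 * gamma))^-1 *
     \1_[set e : R | xi `^ aexp < e < xi / 2] eta) ->
  exists C : R, forall t r : R, 0 <= t -> 0 < r ->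
    (phibar F0 t r <= (C * (jbr (t + r))^-2)%:E)%E.
Proof.
move=> hg _ H0 H.
exists 128 => t r t0 r0.
rewrite /phibar /=.
set T := t + r.
set g := fun xi eta : R => ((xi - eta) / 2) * F0 ((xi + eta) / 2) ((xi - eta) / 2).
have T0 : 0 < T by rewrite /T; lra.
have hk xi eta : T <= xi -> t - r <= eta <= T ->
  0 <= g xi eta /\ (g xi eta = 0 \/ (Num.sqrt xi < eta /\ g xi eta <= (1 / xi) / eta ^+ 3)).
  move=> Txi /andP[e1 e2].
  apply: (@key R gamma F0 xi eta hg H0 H); first by rewrite /T in T0 Txi; lra.
  by rewrite ler_norml; apply/andP; split; rewrite /T in Txi e2 *; lra.
have jT : (jbr T)^-2 = (1 + T ^+ 2)^-1.
  by rewrite /jbr sqr_sqrtr // addr_ge0 // sqr_ge0.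
rewrite jT.
have inner_ge0 xi : T <= xi ->
    (0 <= \int[@lebesgue_measure R]_(eta in `[(t - r)%R, T]) (g xi eta)%:E)%E.
  move=> Txi; apply: integral_ge0 => eta; rewrite /= in_itv /= => he.
  by rewrite lee_fin; exact: (hk xi eta Txi he).1.
have outer (h : R -> R) : (forall xi, T <= xi -> 0 <= h xi) ->
   (forall xi, T <= xi ->
     (\int[@lebesgue_measure R]_(eta in `[(t - r)%R, T]) (g xi eta)%:E <= (h xi)%:E)%E) ->
   (\int[@lebesgue_measure R]_(xi in `[T, +oo[)
      \int[@lebesgue_measure R]_(eta in `[(t - r)%R, T]) (g xi eta)%:E <=
    \int[@lebesgue_measure R]_(xi in `[T, +oo[) (h xi)%:E)%E.
  move=> h0 hb; apply: le_int_nm.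
  - by move=> xi; rewrite /= in_itv /= andbT; exact: inner_ge0.
  - by move=> xi; rewrite /= in_itv /= andbT => ?; rewrite lee_fin h0.
  - move=> xi Dxi; left; split => //; apply: hb.
    by move: Dxi; rewrite /= in_itv /= andbT.
have r4 : (0 <= (4 / r)%:E)%E by rewrite lee_fin divr_ge0 // ltW.
have [T1|T1] := lerP T 1.
  have := outer (fun _ => 0) (fun _ _ => lexx 0).
  have hz xi : T <= xi ->
      (\int[@lebesgue_measure R]_(eta in `[(t - r)%R, T]) (g xi eta)%:E <= 0%:E)%E.
    move=> Txi.
    apply: (@le_trans _ _ (\int[@lebesgue_measure R]_(eta in `[(t - r)%R, T]) (fun=> 0%:E) eta)%E); last first.
      by rewrite integral0_eq.
    apply: le_int_nm.
    - move=> eta; rewrite /= in_itv /= => he.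
      by rewrite lee_fin; exact: (hk xi eta Txi he).1.
    - by [].
    - move=> eta; rewrite /= in_itv /= => he.
      have [_ [gz|[hs _]]] := hk xi eta Txi he; first by right; rewrite gz.
      exfalso.
      have xi0 : 0 <= xi by rewrite /T in T0 Txi *; lra.
      have := sqr_sqrtr xi0; have := sqrtr_ge0 xi.
      move: he => /andP[e1 e2].
      rewrite /T in T0 Txi e2 T1 *; nra.
  move=> /(_ hz) ho.
  apply: le_trans (lee_wpmul2l r4 ho) _.
  by rewrite integral0_eq // mule0 lee_fin divr_ge0 // addr_ge0 // sqr_ge0.
have xi0 xi : T <= xi -> 0 < xi by move=> Txi; rewrite /T in T0 Txi *; lra.
have [rA|rB] := lerP (4 * r) T.
  have hA xi : T <= xi ->
      (\int[@lebesgue_measure R]_(eta in `[(t - r)%R, T]) (g xi eta)%:E <=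
       ((16 * r / T) / xi ^+ 2)%:E)%E.
    move=> Txi; have x0 := xi0 xi Txi.
    apply: (@le_trans _ _ (\int[@lebesgue_measure R]_(eta in `[(t - r)%R, T])
                              (fun=> (8 / (T * xi ^+ 2))%:E) eta)%E).
      apply: le_int_nm.
      - move=> eta; rewrite /= in_itv /= => he.
        by rewrite lee_fin; exact: (hk xi eta Txi he).1.
      - by move=> eta _; rewrite lee_fin divr_ge0 // mulr_ge0 ?sqr_ge0 // ltW.
      - move=> eta Deta; have he := Deta; move: he; rewrite /= in_itv /= => he.
        have [_ [gz|[hs hgb]]] := hk xi eta Txi he; first by right; rewrite gz.
        left; split => //; rewrite lee_fin; apply: le_trans hgb _.
        have := sqr_sqrtr (ltW x0); have := sqrtr_ge0 xi.
        move: he => /andP[e1 e2] ha hb.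
        have eta0 : 0 < eta by lra.
        have xe : xi < eta ^+ 2 by nra.
        have Te : T <= 2 * eta by rewrite /T in rA e1 *; lra.
        have -> : 1 / xi / eta ^+ 3 = 8 / (T * xi ^+ 2) * (T * xi / (8 * eta ^+ 3)).
          by field; rewrite !gt_eqF // ?exprn_gt0.
        apply: ler_piMr; first by rewrite divr_ge0 // mulr_ge0 ?sqr_ge0 // ltW.
        rewrite ler_pdivrMr ?mulr_gt0 ?exprn_gt0 // mul1r.
        have e3 : eta ^+ 3 = eta * eta ^+ 2 by rewrite exprS.
        rewrite e3; nra.
    rewrite int_cst_itv; last by rewrite /T; lra.
    rewrite lee_fin le_eqVlt; apply/orP; left; apply/eqP; rewrite /T.
    by field; rewrite !gt_eqF // ?exprn_gt0 // -/T.
  have := outer (fun xi => (16 * r / T) / xi ^+ 2) _ hA.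
  rewrite (@int_pow R T (16 * r / T) 0) //; last first.
    by rewrite divr_ge0 ?mulr_ge0 // ltW.
  move=> /(_ _) ho.
  have {}ho := ho (fun xi Txi => divr_ge0 (divr_ge0 (mulr_ge0 (ler0n _ 16) (ltW r0)) (ltW T0)) (sqr_ge0 xi)).
  apply: le_trans (lee_wpmul2l r4 ho) _.
  rewrite -EFinM lee_fin.
  have -> : 4 / r * (16 * r / T / (0.+1%:R * T ^+ 0.+1)) = 64 / T ^+ 2.
    by field; rewrite !gt_eqF.
  rewrite ler_pdivrMr ?exprn_gt0 // mulrAC ler_pdivlMr ?ltr_wpDr ?sqr_ge0 //.
  nra.
have hB xi : T <= xi ->
    (\int[@lebesgue_measure R]_(eta in `[(t - r)%R, T]) (g xi eta)%:E <=
     ((1 / 2) / xi ^+ 2)%:E)%E.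
  move=> Txi; have x0 := xi0 xi Txi.
  have s0 : 0 < Num.sqrt xi by rewrite sqrtr_gt0.
  apply: (@le_trans _ _ (\int[@lebesgue_measure R]_(eta in `[Num.sqrt xi, +oo[)
                            ((1 / xi) / eta ^+ 3)%:E)%E).
    apply: le_int_nm.
    - move=> eta; rewrite /= in_itv /= => he.
      by rewrite lee_fin; exact: (hk xi eta Txi he).1.
    - move=> eta; rewrite /= in_itv /= andbT => he.
      by rewrite lee_fin divr_ge0 ?divr_ge0 ?exprn_ge0 // ?(ltW x0) // (le_trans (ltW s0) he).
    - move=> eta Deta; have he := Deta; move: he; rewrite /= in_itv /= => he.
      have [_ [gz|[hs hgb]]] := hk xi eta Txi he; first by right; rewrite gz.
      by left; split; [rewrite /= in_itv /= andbT ltW | rewrite lee_fin].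
  rewrite (@int_pow R (Num.sqrt xi) (1 / xi) 1) //; last by rewrite divr_ge0 // ltW.
  rewrite sqr_sqrtr ?(ltW x0) // lee_fin le_eqVlt; apply/orP; left; apply/eqP.
  by field; rewrite !gt_eqF.
have := outer (fun xi => (1 / 2) / xi ^+ 2) _ hB.
rewrite (@int_pow R T (1 / 2) 0) //.
move=> /(_ _) ho.
have {}ho := ho (fun xi Txi => divr_ge0 (divr_ge0 ler01 (ler0n _ 2)) (sqr_ge0 xi)).
apply: le_trans (lee_wpmul2l r4 ho) _.
rewrite -EFinM lee_fin.
have -> : 4 / r * (1 / 2 / (0.+1%:R * T ^+ 0.+1)) = 2 / (r * T).
  by field; rewrite !gt_eqF.
rewrite ler_pdivrMr ?mulr_gt0 // mulrAC ler_pdivlMr ?ltr_wpDr ?sqr_ge0 //.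
nra.
Qed.
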